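(* Let $k\ge 2$ be an integer, $0<\bar r\le k$ a residue, and $\mathcal{A}$ the alphabet of all positive integers congruent to $\bar r \pmod k$. If for all $n\ge 1$ we have $\mathfrak{D}_{\mathcal{A}} \bmod k^n=\mathbb{Z}/k^n\mathbb{Z}$, then $\mathcal{A}$ has no local obstructions.
   Context: For $a\in\mathbb{N}$ let $\gamma_a=\begin{pmatrix}0&1\\1&a\end{pmatrix}$ and let $\mathcal{G}_{\mathcal{A}}$ be the semigroup generated by $\gamma_a$, $a\in\mathcal{A}$ (products of one or more generators). $\mathfrak{D}_{\mathcal{A}}=\{\langle \gamma e_2,e_2\rangle:\gamma\in\mathcal{G}_{\mathcal{A}}\}$ is the set of lower-right entries of elements of $\mathcal{G}_{\mathcal{A}}$. An integer $d$ is admissible if for every $q\in\mathbb{N}$, $d \bmod q$ lies in $\mathfrak{D}_{\mathcal{A}}\bmod q$; $\mathcal{A}$ has no local obstructions if every integer is admissible. *)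

(* Defs.v *)
From mathcomp Require Import all_boot all_order all_algebra.
Set Implicit Arguments. Unset Strict Implicit. Unset Printing Implicit Defensive.
Import Order.TTheory GRing.Theory Num.Theory.
Local Open Scope ring_scope.

(* gamma_a = [[0,1],[1,a]] as an integer 2x2 matrix *)
Definition gamma (a : nat) : 'M[int]_2 :=
  \matrix_(i < 2, j < 2)
    (if (val i == 0%N) && (val j == 0%N) then 0
     else if (val i == 1%N) && (val j == 1%N) then (a%:Z) else 1).

Definition word_prod (s : seq nat) : 'M[int]_2 :=
  foldr (fun a M => gamma a *m M) 1%:M s.

Definition in_semigroup (A : pred nat) (g : 'M[int]_2) : Prop :=
  exists s : seq nat, s != [::] /\ all A s /\ g = word_prod s.

Definition DA (A : pred nat) (d : int) : Prop :=
  exists g, in_semigroup A g /\ g ord_max ord_max = d.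

Definition admissible (A : pred nat) (d : int) : Prop :=
  forall q : nat, (0 < q)%N ->
    exists x, DA A x /\ (x = d %[mod q%:Z])%Z.

Definition no_local_obstructions (A : pred nat) : Prop :=
  forall d : int, admissible A d.

Definition alphabet_mod (k r : nat) : pred nat :=
  fun a => (0 < a)%N && (a == r %[mod k])%N.

(* Main.v *)
Require Import Defs.
From mathcomp Require Import all_boot all_order all_algebra.
From mathcomp Require Import ring lra zify.
Import GRing.Theory Num.Theory.
Local Open Scope ring_scope.

Notation wB s := (word_prod s ord_max ord_max).
Notation wT s := (word_prod s 0 ord_max).

Lemma wp_cons a s : wT (a :: s) = wB s /\ wB (a :: s) = wT s + a%:Z * wB s.
Proof.
rewrite /= !mxE !big_ord_recl !big_ord0 /gamma !mxE /=.
have -> : (lift ord0 ord0 : 'I_2) = ord_max by apply/val_inj.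
by rewrite !addr0 mul0r add0r !mul1r.
Qed.

Lemma wp_nil : wT [::] = 0 /\ wB [::] = 1.
Proof. by rewrite /= !mxE. Qed.

Lemma wp_cong (M : int) s s' :
  all2 (fun x y : nat => (M %| x%:Z - y%:Z)%Z) s s' ->
  (M %| wT s - wT s')%Z /\ (M %| wB s - wB s')%Z.
Proof.
elim: s s' => [|a s IH] [|b s'] //=.
  by rewrite !subrr !dvdz0.
case/andP=> hab /IH [h1 h2].
have [e1 e2] := wp_cons a s; have [f1 f2] := wp_cons b s'.
rewrite e1 e2 f1 f2; split=> //.
have -> : wT s + a%:Z * wB s - (wT s' + b%:Z * wB s') =
  (wT s - wT s') + (a%:Z - b%:Z) * wB s + b%:Z * (wB s - wB s') by ring.
apply: rpredD; first apply: rpredD => //.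
  by apply: dvdz_mulr.
by apply: dvdz_mull.
Qed.

Lemma crt (M q : nat) : coprime M q -> (0 < M)%N -> (0 < q)%N ->
  forall a z : int, exists a' : nat,
    (0 < a')%N /\ (M %| a'%:Z - a)%Z /\ (q %| a'%:Z - z)%Z.
Proof.
move=> cop M0 q0 a z.
have /coprimezP [[u v] /= huv] : coprimez M q by [].
pose x := a + M%:Z * (u * (z - a)).
pose y := x + M%:Z * q%:Z * (`|x| + 1).
have My : 1 <= M%:Z * q%:Z by rewrite -PoszM lez_nat muln_gt0 M0 q0.
have hx : - x <= `|x| by rewrite -normrN ler_norm.
have y0 : 0 < y.
  rewrite /y; have : `|x| + 1 <= M%:Z * q%:Z * (`|x| + 1).
    by rewrite ler_pMl // ltr_wpDl.
  lra.
exists `|y|%N; rewrite ?(gtz0_abs y0); split.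
  by rewrite absz_gt0 lt0r_neq0.
split.
  have -> : y - a = M%:Z * (u * (z - a) + q%:Z * (`|x| + 1)) by rewrite /y /x; ring.
  exact: dvdz_mulr.
have -> : y - z = q%:Z * (M%:Z * (`|x| + 1) - v * (z - a)).
  have hu : M%:Z * u = 1 - v * q%:Z by rewrite -huv; ring.
  rewrite /y /x (mulrA M%:Z u) hu; ring.
exact: dvdz_mulr.
Qed.

Lemma key (A : pred nat) (M q : nat) : coprime M q -> (0 < M)%N -> (0 < q)%N ->
  (forall a a', A a -> (M%:Z %| a'%:Z - a%:Z)%Z -> (0 < a')%N -> A a') ->
  forall s a, all A (a :: s) -> forall z : int, exists s',
    all2 (fun x y : nat => (M%:Z %| x%:Z - y%:Z)%Z) s' (a :: s) /\
    all A s' /\ (q%:Z %| wB s' - z)%Z.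
Proof.
move=> cop M0 q0 clos; elim=> [|b s IH] a hA z.
  have [a' [a0 [h1 h2]]] := @crt M q cop M0 q0 a%:Z z.
  exists [:: a']; rewrite /= h1 /= andbT.
  move: hA => /= /andP [hA _]; rewrite (clos _ _ hA h1 a0); split => //.
  have [_ e] := wp_cons a' [::]; have [n1 n2] := wp_nil.
  by rewrite e n1 n2 add0r mulr1.
move: hA => /= /andP [hA hA'].
have [t [ht1 [ht2 ht3]]] := IH b hA' 1.
have [a' [a0 [h1 h2]]] := @crt M q cop M0 q0 a%:Z (z - wT t).
exists (a' :: t); rewrite /= h1 ht1 ht2 (clos _ _ hA h1 a0); split => //; split => //.
have [_ e] := wp_cons a' t; rewrite e.
have -> : wT t + a'%:Z * wB t - z = (a'%:Z - (z - wT t)) + a'%:Z * (wB t - 1) by ring.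
by apply: rpredD => //; apply: dvdz_mull.
Qed.

Lemma decomp (k : nat) : (2 <= k)%N -> forall q, (0 < q)%N ->
  exists N q2, coprime k q2 /\ (0 < q2)%N /\ (q %| k ^ N * q2)%N.
Proof.
move=> k2 q; elim: q {-2}q (leqnn q) => [|m IH] q hq q0.
  by rewrite leqn0 in hq; rewrite (eqP hq) in q0.
case cq: (coprime k q).
  by exists 0%N, q; rewrite expn0 mul1n cq q0 dvdnn.
set g := gcdn q k.
have g1 : (1 < g)%N.
  have hg0 : (0 < g)%N by rewrite /g gcdn_gt0 q0.
  have hg1 : g != 1%N by move: cq; rewrite /coprime /g gcdnC => /negbT.
  by rewrite ltn_neqAle eq_sym hg1 hg0.
have gq : (g %| q)%N by apply: dvdn_gcdl.
have q'0 : (0 < q %/ g)%N by rewrite divn_gt0 ?(leq_trans _ g1) // dvdn_leq.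
have q'l : (q %/ g <= m)%N.
  by rewrite -ltnS (leq_trans _ hq) // ltn_Pdiv.
have [N [q2 [c [p d]]]] := IH _ q'l q'0.
exists N.+1, q2; rewrite c p; split => //; split => //.
rewrite -(divnK gq) expnS -mulnA mulnC.
by apply: dvdn_mul => //; apply: dvdn_gcdr.
Qed.

Lemma clos_alpha (k r n : nat) a a' : alphabet_mod k r a ->
  ((k ^ n.+1)%N%:Z %| a'%:Z - a%:Z)%Z -> (0 < a')%N -> alphabet_mod k r a'.
Proof.
rewrite /alphabet_mod => /andP [_ har] hd a0; rewrite a0 /=.
have hk : (k%:Z %| a'%:Z - a%:Z)%Z.
  apply: dvdz_trans hd; rewrite dvdzE /= expnS; exact: dvdn_mulr.
move: hk; rewrite -eqz_mod_dvd => /eqP; rewrite !modz_nat => -[->] //.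
Qed.

Theorem lemmaB8 (k rbar : nat) :
  (2 <= k)%N -> (0 < rbar <= k)%N ->
  (forall n : nat, (1 <= n)%N ->
     forall y : int, exists x, DA (alphabet_mod k rbar) x /\
                              (x = y %[mod (k ^ n)%N%:Z])%Z) ->
  no_local_obstructions (alphabet_mod k rbar).
Proof.
move=> k2 _ H d q q0.
have [N [q2 [c [p dv]]]] := @decomp k k2 q q0.
set M := (k ^ N.+1)%N.
have M0 : (0 < M)%N by rewrite expn_gt0 (leq_trans _ k2).
have cop : coprime M q2 by rewrite coprimeXl.
have [x [[g [[s [sn [sA ->]]] gx]] hx]] := H N.+1 isT d.
case: s sn sA gx => [//|a s] _ sA gx.
have [s' [h1 [h2 h3]]] := @key _ M q2 cop M0 p (@clos_alpha k rbar N) s a sA d.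
exists (wB s'); split.
  exists (word_prod s'); split => //; exists s'; split => //.
  by case: s' h1 {h2 h3}.
apply/eqP; rewrite eqz_mod_dvd.
have [_ hc] := @wp_cong M%:Z _ _ h1.
have hM : (M%:Z %| wB s' - d)%Z.
  move: hx => /eqP; rewrite eqz_mod_dvd -gx => hx.
  have -> : wB s' - d = (wB s' - wB (a :: s)) + (wB (a :: s) - d) by ring.
  exact: rpredD.
have hMq : ((M * q2)%N%:Z %| wB s' - d)%Z.
  by rewrite PoszM Gauss_dvdz ?hM ?h3.
apply: dvdz_trans hMq; rewrite dvdzE /=.
apply: dvdn_trans dv _; apply: dvdn_mul => //.
by rewrite /M expnS dvdn_mull.
Qed.
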